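(* For every sequence $a\in\mathcal{A}$: if $a$ is a member of the Catalan family $\mathcal{C}$ then $\delta a=a$; otherwise $a<\delta a$ in the lexicographic order (on sequences of the same length).
   Context: $\mathcal{A}$ is the set of finite integer sequences $a=(a_0,\dots,a_n)$ (any $n\ge0$) with $0\le a_i\le i$ for all $i$; $\mathcal{A}_n$ denotes those of length $n+1$. The map $\delta:\mathcal{A}\to\mathcal{A}$ is defined by $(\delta a)_i=\#\{j: j<i,\ a_j<a_i\}$ (it preserves length). Lexicographic order on $\mathcal{A}_n$: $a<b$ iff $a_i<b_i$ at the first index where they differ. The Catalan family $\mathcal{C}\subseteq\mathcal{A}$ is defined recursively together with, for each member $a$, a ''sibling list'' $L(a)$, a finite strictly increasing list of integers: $(0)\in\mathcal{C}$ with $L((0))=(0)$. If $a=(a_0,\dots,a_n)\in\mathcal{C}$ with $L(a)=(s_0,s_1,\dots,s_m)$ and $a_n=s_i$, then the children of $a$ are the sequences $(a_0,\dots,a_n,t)$ for $t\in\{s_0,s_1,\dots,s_i,n+1\}$; all of them belong to $\mathcal{C}$ and each has sibling list $(s_0,\dots,s_i,n+1)$. $\mathcal{C}$ consists exactly of the sequences obtained this way. (Thus e.g. generation 1 members are $(0,0),(0,1)$; generation 2 members are $(0,0,0),(0,0,2),(0,1,0),(0,1,1),(0,1,2)$.) *)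

(* Defs.v *)
From mathcomp Require Import all_boot.
Set Implicit Arguments. Unset Strict Implicit. Unset Printing Implicit Defensive.

(* Sequences a = (a_0,...,a_n) represented as [seq nat], a_i = nth 0 a i. *)

Definition inA (a : seq nat) : Prop :=
  0 < size a /\ forall i, i < size a -> nth 0 a i <= i.

Definition delta (a : seq nat) : seq nat :=
  [seq count (fun j => nth 0 a j < nth 0 a i) (iota 0 i) | i <- iota 0 (size a)].

Definition lex_lt (a b : seq nat) : Prop :=
  size a = size b /\
  exists k, k < size a /\ (forall j, j < k -> nth 0 a j = nth 0 b j)
            /\ nth 0 a k < nth 0 b k.

(* The Catalan family together with sibling lists: CatL a L means a is in C
   with sibling list L. *)
Inductive CatL : seq nat -> seq nat -> Prop :=
| CatL0 : CatL [:: 0] [:: 0]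
| CatLS (a L : seq nat) (i t : nat) :
    CatL a L ->
    i < size L ->
    last 0 a = nth 0 L i ->
    t \in rcons (take i.+1 L) (size a) ->
    CatL (rcons a t) (rcons (take i.+1 L) (size a)).

Definition inC (a : seq nat) : Prop := exists L, CatL a L.

(* Main.v *)
Require Import Defs.
From mathcomp Require Import all_boot.
From mathcomp Require Import zify.

Lemma mem_take_sorted (L : seq nat) i v : sorted ltn L -> i < size L ->
  (v \in take i.+1 L) = (v \in L) && (v <= nth 0 L i).
Proof.
move=> sL iL.
have sL' : sorted leq L by move: sL; rewrite ltn_sorted_uniq_leq => /andP[].
apply/idP/andP.
- move=> vt; split; first exact: mem_take vt.
  case/(nthP 0): vt => j; rewrite size_take => jlt <-.
  have ji : j <= i.
    move: jlt; case: (ltnP i.+1 (size L)) => h jlt; [lia|exact: (leq_trans jlt h)].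
  rewrite nth_take; last by lia.
  apply: (sorted_leq_nth leq_trans leqnn 0 sL') => //; rewrite inE; lia.
- case=> vL vle; case/(nthP 0): vL => j jL ej.
  have ji : j <= i.
    rewrite leqNgt; apply/negP => ij.
    have := sorted_ltn_nth ltn_trans 0 sL; move/(_ i j).
    rewrite !inE => /(_ iL jL ij); rewrite -ej in vle; by rewrite ltnNge vle.
  apply/(nthP 0); exists j; first by rewrite size_take; case: (ltnP i.+1 (size L)) => h //; rewrite ltnS.
  by rewrite nth_take; last lia.
Qed.

Definition Good (a : seq nat) m :=
  forall j, nth 0 a m <= j -> j < m -> nth 0 a m <= nth 0 a j.

Definition goodb (a : seq nat) m :=
  all (fun j => nth 0 a m <= nth 0 a j) (iota (nth 0 a m) (m - nth 0 a m)).

Lemma goodP a m : reflect (Good a m) (goodb a m).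
Proof.
apply: (iffP allP) => H j.
- move=> h1 h2; apply: H; rewrite mem_iota; lia.
- rewrite mem_iota => h; apply: H; lia.
Qed.

Lemma size_delta a : size (delta a) = size a.
Proof. by rewrite /delta size_map size_iota. Qed.

Lemma nth_delta a k : k < size a ->
  nth 0 (delta a) k = count (fun j => nth 0 a j < nth 0 a k) (iota 0 k).
Proof.
move=> ks; rewrite /delta (nth_map 0) ?size_iota // nth_iota //.
Qed.

Lemma cnt a m : inA a -> m < size a ->
  count (fun j => nth 0 a j < nth 0 a m) (iota 0 m) =
  nth 0 a m + count (fun j => nth 0 a j < nth 0 a m)
                    (iota (nth 0 a m) (m - nth 0 a m)).
Proof.
case=> _ HA ms.
have vm := HA m ms.
have E : forall x y, x <= y -> iota 0 y = iota 0 x ++ iota x (y - x).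
  by move=> x y h; rewrite -{2}(add0n x) -iotaD subnKC.
rewrite (E _ _ vm) count_cat; congr (_ + _).
transitivity (count predT (iota 0 (nth 0 a m))); last by rewrite count_predT size_iota.
apply: eq_in_count => j; rewrite mem_iota add0n => /andP[_ jl].
have jsa : j < size a by lia.
have := HA j jsa; rewrite /predT /=; lia.
Qed.

Lemma cnt_good a m : inA a -> m < size a -> goodb a m ->
  nth 0 (delta a) m = nth 0 a m.
Proof.
move=> HA ms g; rewrite nth_delta // cnt //.
suff -> : count (fun j => nth 0 a j < nth 0 a m)
   (iota (nth 0 a m) (m - nth 0 a m)) = 0 by rewrite addn0.
apply/eqP; rewrite -leqn0 leqNgt -has_count.
apply/hasPn => j jin; move/allP: g => /(_ j jin); rewrite -leqNgt //.
Qed.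

Lemma cnt_bad a m : inA a -> m < size a -> ~~ goodb a m ->
  nth 0 a m < nth 0 (delta a) m.
Proof.
move=> HA ms g; rewrite nth_delta // cnt //.
rewrite -has_predC has_count in g.
have e : count (predC (fun j => nth 0 a m <= nth 0 a j)) (iota (nth 0 a m) (m - nth 0 a m))
  = count (fun j => nth 0 a j < nth 0 a m) (iota (nth 0 a m) (m - nth 0 a m)).
  by apply: eq_count => j /=; rewrite ltnNge.
rewrite -e; lia.
Qed.

Lemma sorted_rcons_lt (s : seq nat) x : sorted ltn s ->
  (forall y, y \in s -> y < x) -> sorted ltn (rcons s x).
Proof. case: s => [//|y s] /= ps H. rewrite rcons_path ps /=. apply: H; exact: mem_last. Qed.

Lemma nth_rcons_lt (s : seq nat) x j : j < size s -> nth 0 (rcons s x) j = nth 0 s j.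
Proof. by move=> h; rewrite nth_rcons h. Qed.

Definition Inv (a L : seq nat) := [/\ sorted ltn L, last 0 a \in L &
  forall v, (v \in L) <-> (v < size a /\ forall j, v <= j -> j < (size a).-1 -> v <= nth 0 a j)].

Lemma CatL_Inv a L : CatL a L -> Inv a L.
Proof.
elim=> [|a' L0 i t HC [sL lL mL] iL ela tin].
- split => // v; rewrite inE /=; split.
  + by move/eqP->; split => // j; lia.
  + by case=> h _; apply/eqP; lia.
- have memL' : forall v, (v \in rcons (take i.+1 L0) (size a')) =
      (v == size a') || ((v \in L0) && (v <= nth 0 L0 i)).
    by move=> v; rewrite mem_rcons in_cons mem_take_sorted.
  split.
  + apply: sorted_rcons_lt; first exact: take_sorted.
    by move=> y /mem_take /mL [].
  + by rewrite last_rcons.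
  + move=> v; rewrite memL' size_rcons /=; split.
    * case/orP => [/eqP-> | /andP[vL vle]].
        by split; [lia | move=> j h1 h2; lia].
      have [vs vj] := (mL v).1 vL.
      split; first lia.
      move=> j h1 h2; rewrite nth_rcons_lt //.
      case: (ltnP j (size a').-1) => h3; first exact: vj.
      have -> : j = (size a').-1 by lia.
      by rewrite nth_last ela.
    * case=> vs vj; case: (ltnP v (size a')) => h; last first.
        by apply/orP; left; apply/eqP; lia.
      apply/orP; right; apply/andP; split.
        apply/(mL v).2; split => // j h1 h2.
        have h4 : j < size a' by lia.
        have := vj j h1 h4; rewrite nth_rcons_lt //; lia.
      have h5 : v <= (size a').-1 by lia.
      have h6 : (size a').-1 < size a' by lia.
      have := vj (size a').-1 h5 h6.
      by rewrite nth_rcons_lt ?nth_last ?ela //; lia.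
Qed.

Arguments CatL_Inv {a L}.

Lemma CatL_good a L : CatL a L -> forall m, m < size a -> Good a m.
Proof.
elim=> [|a' L0 i t HC IH iL ela tin] m.
- by move=> /= h j h1 h2; lia.
- rewrite size_rcons ltnS leq_eqVlt => /orP[/eqP-> | mlt].
  + have [_ lL mL] := CatL_Inv (CatLS HC iL ela tin).
    rewrite last_rcons in lL.
    have [_ H] := (mL t).1 lL.
    rewrite /Good nth_rcons ltnn eqxx => j h1 h2.
    by apply: H => //; rewrite size_rcons.
  + have := IH m mlt; rewrite /Good nth_rcons_lt // => H j h1 h2.
    rewrite nth_rcons_lt; last by lia.
    exact: H.
Qed.

Arguments CatL_good {a L}.

Lemma good_CatL a : 0 < size a -> inA a -> (forall m, m < size a -> Good a m) -> inC a.
Proof.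
elim/last_ind: a => [//|a' t IH] _ HA HG.
case: (posnP (size a')) => [/size0nil e | sa'].
- subst a'; have := HA.2 0 isT; rewrite /= => t0.
  exists [:: 0]; have -> : t = 0 by lia.
  exact: CatL0.
- have HA' : inA a'.
    split=> // k ks; have := HA.2 k; rewrite size_rcons nth_rcons_lt // => H.
    by apply: H; lia.
  have HG' : forall m, m < size a' -> Good a' m.
    move=> m mlt; have := HG m; rewrite size_rcons /Good nth_rcons_lt // => H.
    move=> j h1 h2; have := H (ltn_trans mlt (ltnSn _)) j h1 h2.
    by rewrite nth_rcons_lt //; lia.
  case: (IH sa' HA' HG') => L HC.
  have [sL lL mL] := CatL_Inv HC.
  have [i iL ela] : exists2 i, i < size L & last 0 a' = nth 0 L i.
    by exists (index (last 0 a') L); [rewrite index_mem | rewrite nth_index].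
  exists (rcons (take i.+1 L) (size a')); apply: (CatLS HC iL ela).
  rewrite mem_rcons in_cons mem_take_sorted //.
  have := HG (size a'); rewrite size_rcons ltnSn => /(_ isT).
  rewrite /Good nth_rcons ltnn eqxx => Gt.
  have := HA.2 (size a'); rewrite size_rcons nth_rcons ltnn eqxx => /(_ (ltnSn _)) tle.
  case: (ltnP t (size a')) => h; last first.
    by apply/orP; left; apply/eqP; lia.
  apply/orP; right; apply/andP; split.
    apply/(mL t).2; split => // j h1 h2.
    have h4 : j < size a' by lia.
    have := Gt j h1 h4; rewrite nth_rcons_lt //.
  have h5 : t <= (size a').-1 by lia.
  have h6 : (size a').-1 < size a' by lia.
  have := Gt _ h5 h6.
  by rewrite nth_rcons_lt // nth_last ela.
Qed.

Theorem mainTheorem2 (a : seq nat) :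
  inA a -> (inC a -> delta a = a) /\ (~ inC a -> lex_lt a (delta a)).
Proof.
move=> HA.
have gb : forall m, m < size a -> goodb a m -> nth 0 (delta a) m = nth 0 a m.
  by move=> m ms g; apply: cnt_good.
split.
- case=> L HC.
  apply: (@eq_from_nth _ 0); first by rewrite size_delta.
  move=> m; rewrite size_delta => ms; apply: gb => //.
  by apply/goodP; apply: (CatL_good HC).
- move=> nC.
  have : ~~ all (goodb a) (iota 0 (size a)).
    apply/negP => /allP H; apply: nC; apply: good_CatL => //; first exact: HA.1.
    move=> m ms; apply/goodP; apply: H; rewrite mem_iota; lia.
  case/allPn => m0; rewrite mem_iota add0n => /andP[_ m0s] bad0.
  have ex : exists m, (m < size a) && ~~ goodb a m by exists m0; rewrite m0s bad0.
  case: (ex_minnP ex) => m /andP[ms bad] mmin.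
  split; first by rewrite size_delta.
  exists m; split=> //; split; last exact: cnt_bad.
  move=> j jm; have js : j < size a by lia.
  rewrite gb //; apply/negPn/negP => bj.
  by have := mmin j; rewrite js bj => /(_ isT); lia.
Qed.
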